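(* For integers $n\ge 1$ and $m$ with $1<m<\sqrt{2n}$, $E_m\!\left[\frac1\ell\right]<\frac{1}{E_{m-1}[\ell]}$.
   Context: $\mathbf X=\{X_1,\dots,X_n\}$ with the uniform measure. For $1\le m\le n$, $\mathcal X_m$ is the set of finite sequences $\chi=(\chi_1,\dots,\chi_\ell)$ of elements of $\mathbf X$ having exactly $m$ distinct entries and with $\chi_\ell$ different from all earlier entries; $\ell(\chi)$ is its length and $\chi$ has probability $n^{-\ell(\chi)}$. $E_m[f]=\sum_{\chi\in\mathcal X_m}f(\chi)\,n^{-\ell(\chi)}$; in particular $E_{m-1}[\ell]=\sum_{j=0}^{m-2}\frac n{n-j}$. *)

(* Defs.v *)
From Stdlib Require Import Reals List Arith.
Import ListNotations.
Open Scope R_scope.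

(* The alphabet X = {X_1,...,X_n} is encoded as {0,...,n-1}. *)

Fixpoint all_seqs (n L : nat) : list (list nat) :=
  match L with
  | O => [ [] ]
  | S L' => flat_map (fun s => map (fun x => x :: s) (seq 0 n)) (all_seqs n L')
  end.

Definition n_distinct (s : list nat) : nat := length (nodup Nat.eq_dec s).

Definition last_new (s : list nat) : bool :=
  match rev s with
  | [] => false
  | x :: r => negb (existsb (Nat.eqb x) r)
  end.

Definition inXm (m : nat) (s : list nat) : bool :=
  Nat.eqb (n_distinct s) m && last_new s.

Definition Eterm (n m : nat) (f : list nat -> R) (L : nat) : R :=
  fold_right Rplus 0
    (map (fun s => f s * / (INR n ^ L)) (filter (inXm m) (all_seqs n L))).

Definition E_is (n m : nat) (f : list nat -> R) (v : R) : Prop :=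
  infinite_sum (Eterm n m f) v.

Definition ell (s : list nat) : R := INR (length s).

(* Main.v *)
Require Import Defs.
From Stdlib Require Import Reals List Arith Lia Lra Psatz Permutation.
Import ListNotations.
Open Scope R_scope.

Definition sumL {A} (l : list A) (f : A -> R) : R := fold_right Rplus 0 (map f l).

Lemma sumL_nil {A} (f : A -> R) : sumL [] f = 0.
Proof. reflexivity. Qed.
Lemma sumL_cons {A} (a : A) l f : sumL (a :: l) f = f a + sumL l f.
Proof. reflexivity. Qed.
Lemma sumL_app {A} (l1 l2 : list A) f : sumL (l1 ++ l2) f = sumL l1 f + sumL l2 f.
Proof. induction l1; simpl app; [rewrite sumL_nil; lra|]. rewrite !sumL_cons, IHl1; lra. Qed.
Lemma sumL_map {A B} (g : A -> B) l f : sumL (map g l) f = sumL l (fun a => f (g a)).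
Proof. induction l; [reflexivity|]. rewrite map_cons, !sumL_cons, IHl. reflexivity. Qed.
Lemma sumL_flat_map {A B} (g : A -> list B) l f :
  sumL (flat_map g l) f = sumL l (fun a => sumL (g a) f).
Proof. induction l; [reflexivity|]. simpl flat_map. rewrite sumL_app, sumL_cons, IHl. reflexivity. Qed.
Lemma sumL_ext_in {A} (l : list A) f g : (forall a, In a l -> f a = g a) -> sumL l f = sumL l g.
Proof. induction l; intros H; [reflexivity|]. rewrite !sumL_cons, H, IHl; auto with datatypes. Qed.
Lemma sumL_plus {A} (l : list A) f g : sumL l (fun a => f a + g a) = sumL l f + sumL l g.
Proof. induction l; [simpl; unfold sumL; simpl; lra|]. rewrite !sumL_cons, IHl; lra. Qed.
Lemma sumL_scal {A} (l : list A) c f : sumL l (fun a => c * f a) = c * sumL l f.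
Proof. induction l; [unfold sumL; simpl; lra|]. rewrite !sumL_cons, IHl; lra. Qed.
Lemma sumL_zero {A} (l : list A) : sumL l (fun _ => 0) = 0.
Proof. induction l; [reflexivity|]. rewrite sumL_cons, IHl; lra. Qed.
Lemma sumL_const {A} (l : list A) c : sumL l (fun _ => c) = c * INR (length l).
Proof. induction l; [unfold sumL; simpl; lra|]. rewrite sumL_cons, IHl. simpl length. rewrite S_INR; lra. Qed.
Lemma sumL_swap {A B} (l1 : list A) (l2 : list B) F :
  sumL l1 (fun a => sumL l2 (fun b => F a b)) = sumL l2 (fun b => sumL l1 (fun a => F a b)).
Proof.
  induction l1. - rewrite sumL_nil. symmetry. apply sumL_zero.
  - rewrite sumL_cons, IHl1. rewrite <- sumL_plus. reflexivity.
Qed.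
Lemma sumL_filter {A} (p : A -> bool) l f :
  sumL (filter p l) f = sumL l (fun a => if p a then f a else 0).
Proof. induction l; [reflexivity|]. simpl filter. rewrite (sumL_cons a l). destruct (p a); rewrite ?sumL_cons, IHl; lra. Qed.
Lemma sumL_cnt {A} (p : A -> bool) l :
  sumL l (fun a => if p a then 1 else 0) = INR (length (filter p l)).
Proof. rewrite <- sumL_filter, sumL_const. lra. Qed.
Lemma sumL_nonneg {A} (l : list A) f : (forall a, In a l -> 0 <= f a) -> 0 <= sumL l f.
Proof. induction l; intros H; [unfold sumL; simpl; lra|]. rewrite sumL_cons.
  assert (0 <= f a) by auto with datatypes. assert (0 <= sumL l f) by auto with datatypes. lra. Qed.

Lemma all_seqs_In n L s : In s (all_seqs n L) -> length s = L /\ Forall (fun x => (x < n)%nat) s.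
Proof.
  revert s; induction L; intros s H; simpl in H.
  - destruct H as [<-|[]]. split; auto.
  - apply in_flat_map in H as [t [Ht H]]. apply in_map_iff in H as [x [<- Hx]].
    apply in_seq in Hx. destruct (IHL t Ht). split; simpl; [lia|]. constructor; auto; lia.
Qed.

Lemma W_S n L f : sumL (all_seqs n (S L)) f =
  sumL (all_seqs n L) (fun s => sumL (seq 0 n) (fun x => f (x :: s))).
Proof. simpl all_seqs. rewrite sumL_flat_map. apply sumL_ext_in; intros. apply sumL_map. Qed.

Lemma W_swap n L : forall F : list nat -> R,
  sumL (all_seqs n L) (fun s => sumL (seq 0 n) (fun x => F (x :: s))) =
  sumL (all_seqs n L) (fun s => sumL (seq 0 n) (fun x => F (s ++ [x]))).
Proof.
  induction L; intros F.
  - reflexivity.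
  - rewrite !W_S.
    rewrite (IHL (fun u => sumL (seq 0 n) (fun x => F (x :: u)))).
    apply sumL_ext_in; intros t _. simpl app. apply sumL_swap.
Qed.

Lemma W_S_app n L f : sumL (all_seqs n (S L)) f =
  sumL (all_seqs n L) (fun s => sumL (seq 0 n) (fun x => f (s ++ [x]))).
Proof. rewrite W_S. apply W_swap. Qed.

Lemma nd_cons x s : n_distinct (x :: s) =
  if in_dec Nat.eq_dec x s then n_distinct s else S (n_distinct s).
Proof. unfold n_distinct. simpl. destruct (in_dec Nat.eq_dec x s); reflexivity. Qed.

Lemma nd_app_new x s : ~ In x s -> n_distinct (s ++ [x]) = S (n_distinct s).
Proof.
  induction s as [|a s IH]; intros H.
  - reflexivity.
  - simpl app. rewrite !nd_cons.
    assert (Ha : a <> x) by (intro; subst; apply H; left; auto).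
    assert (Hs : ~ In x s) by (intro; apply H; right; auto).
    destruct (in_dec Nat.eq_dec a (s ++ [x])) as [i|i];
    destruct (in_dec Nat.eq_dec a s) as [j|j]; rewrite ?IH by auto; auto.
    + apply in_app_or in i as [i|[i|[]]]; [contradiction|congruence].
    + exfalso; apply i; apply in_or_app; auto.
Qed.

Lemma cnt_in n s : Forall (fun y => (y < n)%nat) s ->
  sumL (seq 0 n) (fun x => if in_dec Nat.eq_dec x s then 1 else 0) = INR (n_distinct s).
Proof.
  intros Hs.
  rewrite (sumL_ext_in _ _ (fun x => if (fun x => if in_dec Nat.eq_dec x s then true else false) x then 1 else 0)).
  2:{ intros; simpl; destruct in_dec; auto. }
  rewrite sumL_cnt. f_equal. unfold n_distinct. apply Permutation_length.
  apply NoDup_Permutation. apply NoDup_filter, seq_NoDup. apply NoDup_nodup.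
  intros x. rewrite filter_In, nodup_In, in_seq. split.
  - intros [_ H]. destruct in_dec; congruence.
  - intros H. rewrite Forall_forall in Hs. specialize (Hs x H). split; [lia|].
    destruct in_dec; tauto.
Qed.

Lemma sum_if_in n s A B : Forall (fun y => (y < n)%nat) s ->
  sumL (seq 0 n) (fun x => if in_dec Nat.eq_dec x s then A else B) =
  A * INR (n_distinct s) + B * (INR n - INR (n_distinct s)).
Proof.
  intros Hs. rewrite <- (cnt_in n s Hs).
  rewrite (sumL_ext_in _ _ (fun x => B + (A - B) * (if in_dec Nat.eq_dec x s then 1 else 0))).
  2:{ intros; destruct in_dec; lra. }
  rewrite sumL_plus, sumL_scal, sumL_const, length_seq. lra.
Qed.

Lemma last_new_app s x : last_new (s ++ [x]) = if in_dec Nat.eq_dec x s then false else true.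
Proof.
  unfold last_new. rewrite rev_unit.
  destruct (in_dec Nat.eq_dec x s) as [i|i].
  - replace (existsb (Nat.eqb x) (rev s)) with true; auto.
    symmetry; apply existsb_exists. exists x; split; [apply in_rev; rewrite rev_involutive; auto| apply Nat.eqb_refl].
  - destruct (existsb (Nat.eqb x) (rev s)) eqn:E; auto.
    apply existsb_exists in E as [y [Hy Hxy]]. apply Nat.eqb_eq in Hxy; subst.
    exfalso; apply i. apply in_rev; auto.
Qed.

Definition g k (s : list nat) : R := if Nat.eqb (n_distinct s) k then 1 else 0.
Definition P n L k := sumL (all_seqs n L) (g k) / INR n ^ L.

Lemma npow_pos n L : (1 <= n)%nat -> 0 < INR n ^ L.
Proof. intros. apply pow_lt. apply lt_0_INR; lia. Qed.

Lemma P_nonneg n L k : (1 <= n)%nat -> 0 <= P n L k.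
Proof.
  intros Hn. unfold P. unfold Rdiv; apply Rmult_le_pos; [|left; apply Rinv_0_lt_compat, npow_pos; auto].
  apply sumL_nonneg. intros; unfold g; destruct Nat.eqb; lra.
Qed.

Lemma P_0 n k : P n 0 k = if Nat.eqb 0 k then 1 else 0.
Proof. unfold P, g. simpl. unfold sumL; simpl. destruct (Nat.eqb 0 k); lra. Qed.

Lemma inner_g n s k : Forall (fun y => (y < n)%nat) s ->
  sumL (seq 0 n) (fun x => g k (x :: s)) =
  g k s * INR (n_distinct s) + (if Nat.eqb (S (n_distinct s)) k then 1 else 0) * (INR n - INR (n_distinct s)).
Proof.
  intros Hs.
  rewrite (sumL_ext_in _ _ (fun x => if in_dec Nat.eq_dec x s then g k s else (if Nat.eqb (S (n_distinct s)) k then 1 else 0))).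
  2:{ intros x _. unfold g. rewrite nd_cons. destruct in_dec; reflexivity. }
  rewrite sum_if_in by auto. lra.
Qed.

Lemma P_S0 n L : P n (S L) 0 = 0.
Proof.
  unfold P. rewrite W_S.
  rewrite (sumL_ext_in _ _ (fun _ => 0)). rewrite sumL_zero; lra.
  intros s _. rewrite (sumL_ext_in _ _ (fun _ => 0)). apply sumL_zero.
  intros x _. unfold g. rewrite nd_cons. destruct in_dec.
  - destruct (n_distinct s) eqn:E; [|reflexivity].
    unfold n_distinct in E. apply length_zero_iff_nil in E.
    exfalso. apply (nodup_In Nat.eq_dec s x) in i. rewrite E in i. destruct i.
  - reflexivity.
Qed.

Lemma P_SS n L j : (1 <= n)%nat ->
  P n (S L) (S j) = INR (S j) / INR n * P n L (S j) + (INR n - INR j) / INR n * P n L j.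
Proof.
  intros Hn. unfold P. rewrite W_S.
  rewrite (sumL_ext_in _ _ (fun s => INR (S j) * g (S j) s + (INR n - INR j) * g j s)).
  2:{ intros s Hs. apply all_seqs_In in Hs as [_ Hs]. rewrite inner_g by auto.
      unfold g. destruct (Nat.eqb_spec (n_distinct s) (S j)) as [E|E];
      destruct (Nat.eqb_spec (S (n_distinct s)) (S j)) as [E2|E2];
      destruct (Nat.eqb_spec (n_distinct s) j) as [E3|E3]; try lia.
      - rewrite E; lra.
      - rewrite E3; lra.
      - lra. }
  rewrite sumL_plus, !sumL_scal. simpl pow.
  assert (0 < INR n) by (apply lt_0_INR; lia). pose proof (npow_pos n L Hn).
  field. lra.
Qed.

Lemma Eterm_0 n k f : Eterm n k f 0 = 0.
Proof. unfold Eterm. simpl. unfold inXm. rewrite Bool.andb_false_r. reflexivity. Qed.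

Lemma Eterm_S n j f phi L : (1 <= n)%nat -> (forall s, f s = phi (length s)) ->
  Eterm n (S j) f (S L) = phi (S L) * ((INR n - INR j) / INR n) * P n L j.
Proof.
  intros Hn Hf. unfold Eterm.
  change (fold_right Rplus 0 (map (fun s => f s * / INR n ^ S L) (filter (inXm (S j)) (all_seqs n (S L)))))
    with (sumL (filter (inXm (S j)) (all_seqs n (S L))) (fun s => f s * / INR n ^ S L)).
  rewrite sumL_filter, W_S_app. unfold P.
  rewrite (sumL_ext_in _ _ (fun s => (phi (S L) / INR n ^ S L * (INR n - INR j)) * g j s)).
  2:{ intros s Hs. apply all_seqs_In in Hs as [Hl Hs].
      rewrite (sumL_ext_in _ _ (fun x => if in_dec Nat.eq_dec x s then 0 else g j s * (phi (S L) / INR n ^ S L))).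
      2:{ intros x _. unfold inXm. rewrite last_new_app. destruct in_dec as [i|i].
          - rewrite Bool.andb_false_r. reflexivity.
          - rewrite Bool.andb_true_r, nd_app_new by auto. simpl Nat.eqb. unfold g.
            rewrite Hf, length_app, Hl. simpl length. rewrite Nat.add_1_r.
            destruct Nat.eqb; lra. }
      rewrite sum_if_in by auto. unfold g.
      destruct (Nat.eqb_spec (n_distinct s) j) as [E|E]; [rewrite E|]; lra. }
  rewrite sumL_scal. simpl pow.
  assert (0 < INR n) by (apply lt_0_INR; lia). pose proof (npow_pos n L Hn).
  field. lra.
Qed.

Lemma Rdiv_le_0_compat a b : 0 <= a -> 0 < b -> 0 <= a / b.
Proof. intros; unfold Rdiv; apply Rmult_le_pos; [auto| left; apply Rinv_0_lt_compat; auto]. Qed.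

Definition D n L j := sum_f_R0 (fun i => P n L i) j.

Lemma D_S n L j : (1 <= n)%nat ->
  D n (S L) j = D n L j - (INR n - INR j) / INR n * P n L j.
Proof.
  intros Hn. assert (0 < INR n) by (apply lt_0_INR; lia).
  induction j; unfold D in *; simpl sum_f_R0.
  - rewrite P_S0. simpl INR. field. lra.
  - rewrite IHj, P_SS by auto. rewrite S_INR. field. lra.
Qed.

Lemma D_0 n j : D n 0 j = 1.
Proof. induction j; unfold D in *; simpl sum_f_R0; rewrite P_0; simpl; [lra|]. rewrite IHj; lra. Qed.

Lemma D_nonneg n L j : (1 <= n)%nat -> 0 <= D n L j.
Proof. intros; apply cond_pos_sum; intros; apply P_nonneg; auto. Qed.

Lemma G_eq n j N : (1 <= n)%nat ->
  sum_f_R0 (fun L => (INR n - INR j) / INR n * P n L j) N = D n 0 j - D n (S N) j.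
Proof.
  intros Hn. induction N; simpl sum_f_R0.
  - rewrite D_S by auto. lra.
  - rewrite IHN, (D_S n (S N)) by auto. lra.
Qed.

Lemma G_le n j N : (1 <= n)%nat ->
  sum_f_R0 (fun L => (INR n - INR j) / INR n * P n L j) N <= 1.
Proof. intros Hn. rewrite G_eq, D_0 by auto. pose proof (D_nonneg n (S N) j Hn). lra. Qed.

Lemma P_sum_bound n i N : (1 <= n)%nat -> (i < n)%nat ->
  sum_f_R0 (fun L => P n L i) N <= INR n / (INR n - INR i).
Proof.
  intros Hn Hi. pose proof (G_le n i N Hn).
  assert (Hlt : INR i < INR n) by (apply lt_INR; auto).
  assert (0 < INR n) by (apply lt_0_INR; lia).
  rewrite <- (Rmult_1_r (INR n / (INR n - INR i))).
  set (c := (INR n - INR i) / INR n) in *.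
  assert (Hc : 0 < c) by (unfold c; apply Rdiv_lt_0_compat; lra).
  replace (INR n / (INR n - INR i)) with (/ c) by (unfold c; field; lra).
  assert (Hs : sum_f_R0 (fun L => c * P n L i) N = c * sum_f_R0 (fun L => P n L i) N).
  { rewrite scal_sum. apply sum_eq. intros; ring. }
  fold c in H. rewrite Hs in H.
  replace (sum_f_R0 (fun L => P n L i) N) with (/ c * (c * sum_f_R0 (fun L => P n L i) N)) by (field; lra).
  rewrite Rmult_1_r. rewrite <- (Rmult_1_r (/ c)) at 2.
  apply Rmult_le_compat_l; [left; apply Rinv_0_lt_compat; auto| auto].
Qed.

Lemma P_zero_below n L j : (1 <= n)%nat -> (L < j)%nat -> P n L j = 0.
Proof.
  intros Hn. revert j; induction L; intros j H.
  - rewrite P_0. destruct (Nat.eqb_spec 0 j); [lia|auto].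
  - destruct j as [|j]; [lia|]. rewrite P_SS by auto. rewrite !IHL by lia. lra.
Qed.

Lemma P_pos n L k : (1 <= n)%nat -> (1 <= k <= L)%nat -> (k <= n)%nat -> 0 < P n L k.
Proof.
  intros Hn. assert (0 < INR n) by (apply lt_0_INR; lia). revert k; induction L; intros k Hk Hkn.
  - lia.
  - destruct k as [|k]; [lia|]. rewrite P_SS by auto.
    assert (Hk' : INR k < INR n) by (apply lt_INR; lia).
    assert (0 <= INR (S k) / INR n * P n L (S k)).
    { apply Rmult_le_pos; [apply Rdiv_le_0_compat; [apply pos_INR|auto]|apply P_nonneg; auto]. }
    destruct k as [|k].
    + destruct L as [|L].
      * rewrite !P_0. simpl Nat.eqb. simpl INR.
        simpl. replace ((INR n - 0) / INR n * 1) with 1 by (field; lra). lra.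
      * assert (0 < P n (S L) 0 \/ P n (S L) 0 = 0) by (pose proof (P_nonneg n (S L) 0 Hn); lra).
        assert (0 < P n (S L) 1) by (apply IHL; lia).
        assert (0 < INR 1 / INR n) by (apply Rdiv_lt_0_compat; simpl; lra).
        assert (0 <= (INR n - INR 0) / INR n * P n (S L) 0).
        { apply Rmult_le_pos; [apply Rdiv_le_0_compat; simpl; lra|apply P_nonneg; auto]. }
        pose proof (Rmult_lt_0_compat _ _ H3 H2). lra.
    + assert (0 < P n L (S k)) by (apply IHL; lia).
      assert (0 < (INR n - INR (S k)) / INR n) by (apply Rdiv_lt_0_compat; lra).
      pose proof (Rmult_lt_0_compat _ _ H2 H1). lra.
Qed.

Lemma lim_le (U : nat -> R) l c N0 : Un_cv U l -> (forall k, U (N0 + k)%nat <= c) -> l <= c.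
Proof.
  intros Hcv Hb. destruct (Rle_dec l c) as [|Hlc]; auto. exfalso.
  destruct (Hcv (l - c)) as [N HN]; [lra|].
  specialize (HN (N0 + N)%nat ltac:(lia)). specialize (Hb N).
  unfold Rdist in HN. apply Rabs_def2 in HN. lra.
Qed.

Lemma sumf_growing (t : nat -> R) : (forall k, 0 <= t k) -> Un_growing (sum_f_R0 t).
Proof. intros H k. simpl. specialize (H (S k)). lra. Qed.

Lemma sum_cv (t : nat -> R) c : (forall k, 0 <= t k) -> (forall N, sum_f_R0 t N <= c) ->
  { l | infinite_sum t l }.
Proof.
  intros H1 H2. destruct (growing_cv (sum_f_R0 t)) as [l Hl].
  - apply sumf_growing; auto.
  - exists c. intros x [i ->]. auto.
  - exists l. exact Hl.
Qed.

Lemma sumS f N : sum_f_R0 f (S N) = sum_f_R0 f N + f (S N).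
Proof. reflexivity. Qed.
Lemma sum0 f : sum_f_R0 f 0 = f 0%nat.
Proof. reflexivity. Qed.

Lemma a_exists n j : (1 <= n)%nat -> (1 <= j)%nat -> (j < n)%nat ->
  exists a, E_is n (S j) (fun s => / ell s) a /\ a < / INR (S j).
Proof.
  intros Hn Hj Hjn.
  assert (Hn0 : 0 < INR n) by (apply lt_0_INR; lia).
  assert (Hjn' : INR j < INR n) by (apply lt_INR; auto).
  set (t := Eterm n (S j) (fun s => / ell s)).
  set (u := fun L => (INR n - INR j) / INR n * P n L j).
  assert (Hu : forall L, 0 <= u L).
  { intros; unfold u; apply Rmult_le_pos; [apply Rdiv_le_0_compat; lra| apply P_nonneg; auto]. }
  assert (tS : forall L, t (S L) = / INR (S L) * u L).
  { intros L. unfold t, u. rewrite (Eterm_S n j _ (fun L => / INR L)) by (auto; intros; reflexivity). ring. }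
  assert (t0 : t 0%nat = 0) by apply Eterm_0.
  assert (Hm : 0 < INR (S j)) by (apply lt_0_INR; lia).
  assert (tnn : forall k, 0 <= t k).
  { intros [|k]; [rewrite t0; lra| rewrite tS; apply Rmult_le_pos; auto; left; apply Rinv_0_lt_compat, lt_0_INR; lia]. }
  assert (tle : forall L, t (S L) <= / INR (S j) * u L).
  { intros L. rewrite tS. destruct (Nat.lt_ge_cases L j) as [Hl|Hl].
    - unfold u. rewrite P_zero_below by auto. lra.
    - apply Rmult_le_compat_r; auto. apply Rinv_le_contravar; auto. apply le_INR; lia. }
  assert (Abound : forall N, sum_f_R0 t (S N) <= / INR (S j) * sum_f_R0 u N).
  { induction N.
    - rewrite sumS, !sum0, t0. pose proof (tle 0%nat). lra.
    - rewrite sumS, (sumS u). pose proof (tle (S N)). lra. }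
  assert (usum : forall N, sum_f_R0 u N <= 1) by (intros; apply G_le; auto).
  assert (Hinvm : 0 < / INR (S j)) by (apply Rinv_0_lt_compat; auto).
  assert (Abound2 : forall N, sum_f_R0 t N <= / INR (S j)).
  { intros [|N]. - rewrite sum0, t0; lra.
    - pose proof (Abound N). pose proof (usum N).
      pose proof (Rmult_le_compat_l _ _ _ (Rlt_le _ _ Hinvm) H0). lra. }
  destruct (sum_cv t (/ INR (S j)) tnn Abound2) as [a Ha].
  exists a. split; [exact Ha|].
  set (delta := (/ INR (S j) - / INR (S (S j))) * u (S j)).
  assert (Hdelta : 0 < delta).
  { unfold delta. apply Rmult_lt_0_compat.
    - assert (/ INR (S (S j)) < / INR (S j)); [|lra].
      apply Rinv_lt_contravar. apply Rmult_lt_0_compat; auto; apply lt_0_INR; lia.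
      apply lt_INR; lia.
    - unfold u. apply Rmult_lt_0_compat; [apply Rdiv_lt_0_compat; lra|]. apply P_pos; auto; lia. }
  assert (Astrict : forall k, sum_f_R0 t (S (S j + k)) + delta <= / INR (S j) * sum_f_R0 u (S j + k)).
  { induction k.
    - rewrite Nat.add_0_r. rewrite sumS, (tS (S j)), (sumS u).
      pose proof (Abound j). unfold delta. lra.
    - replace (S j + S k)%nat with (S (S j + k)) by lia.
      rewrite sumS, (sumS u).
      pose proof (tle (S (S j + k))). lra. }
  assert (a <= / INR (S j) - delta).
  { apply (lim_le (sum_f_R0 t) a _ (S (S j))). exact Ha.
    intros k. simpl Nat.add. pose proof (Astrict k) as A1. pose proof (usum (S j + k)%nat) as A2.
    pose proof (Rmult_le_compat_l _ _ _ (Rlt_le _ _ Hinvm) A2) as A3. change (S j + k)%nat with (S (j + k)) in *. lra. }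
  lra.
Qed.

Definition H n j := sum_f_R0 (fun i => INR n / (INR n - INR i)) j.

Lemma sumD_bound n j N : (1 <= n)%nat -> (j < n)%nat ->
  sum_f_R0 (fun L => D n L j) N <= H n j.
Proof.
  intros Hn. induction j; intros Hj.
  - unfold H. rewrite sum0. rewrite (sum_eq _ (fun L => P n L 0)) by (intros; reflexivity).
    apply P_sum_bound; auto.
  - unfold H. rewrite sumS. fold (H n j).
    rewrite (sum_eq _ (fun L => D n L j + P n L (S j))) by (intros; reflexivity).
    rewrite sum_plus. pose proof (IHj ltac:(lia)). pose proof (P_sum_bound n (S j) N Hn Hj). lra.
Qed.

Lemma H_bound n M : (1 <= n)%nat -> (M < n)%nat ->
  H n M <= INR (S M) + INR M * INR (S M) / (2 * (INR n - INR M)).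
Proof.
  intros Hn. induction M; intros HM.
  - unfold H. rewrite sum0. simpl INR.
    assert (0 < INR n) by (apply lt_0_INR; lia).
    replace (INR n / (INR n - 0)) with 1 by (field; lra).
    unfold Rdiv. rewrite !Rmult_0_l. lra.
  - unfold H. rewrite sumS. fold (H n M).
    pose proof (IHM ltac:(lia)) as IH.
    assert (HMn : INR (S M) < INR n) by (apply lt_INR; auto).
    rewrite S_INR in *. rewrite S_INR.
    set (x := INR n - (INR M + 1)) in *.
    assert (Hx : 0 < x) by (unfold x; lra).
    replace (INR n - INR M) with (x + 1) in * by (unfold x; lra).
    replace (INR n / x) with (1 + (INR M + 1) / x) by (unfold x; field; lra).
    assert (HM0 : 0 <= INR M) by apply pos_INR.
    assert (K : INR M * (INR M + 1) / (2 * (x + 1)) <= INR M * (INR M + 1) / (2 * x)).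
    { unfold Rdiv. apply Rmult_le_compat_l; [nra|]. apply Rinv_le_contravar; lra. }
    assert (E : INR M * (INR M + 1) / (2 * x) + (INR M + 1) / x = (INR M + 1) * (INR M + 1 + 1) / (2 * x))
      by (field; lra).
    rewrite S_INR. lra.
Qed.

Lemma b_exists n j : (1 <= n)%nat -> (j < n)%nat ->
  INR j * INR (S j) <= 2 * (INR n - INR j) ->
  exists b, E_is n (S j) ell b /\ 0 < b /\ b <= INR (S (S j)).
Proof.
  intros Hn Hjn Hq.
  assert (Hn0 : 0 < INR n) by (apply lt_0_INR; lia).
  assert (Hjn' : INR j < INR n) by (apply lt_INR; auto).
  set (t := Eterm n (S j) ell).
  set (w := fun L => (INR n - INR j) / INR n * P n L j).
  assert (Hw : forall L, 0 <= w L).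
  { intros; unfold w; apply Rmult_le_pos; [apply Rdiv_le_0_compat; lra| apply P_nonneg; auto]. }
  assert (tS : forall L, t (S L) = INR (S L) * w L).
  { intros L. unfold t, w. rewrite (Eterm_S n j _ INR) by (auto; intros; reflexivity). ring. }
  assert (t0 : t 0%nat = 0) by apply Eterm_0.
  assert (tnn : forall k, 0 <= t k).
  { intros [|k]; [rewrite t0; lra| rewrite tS; apply Rmult_le_pos; auto; apply pos_INR]. }
  assert (wD : forall L, w L = D n L j - D n (S L) j).
  { intros L. unfold w. rewrite (D_S n L j Hn). ring. }
  assert (Bid : forall N, sum_f_R0 t (S N) = sum_f_R0 (fun L => D n L j) N - INR (S N) * D n (S N) j).
  { induction N.
    - rewrite sumS, !sum0, t0, tS, wD. simpl INR. ring.
    - rewrite sumS, IHN, (sumS (fun L => D n L j)), tS, wD. rewrite (S_INR (S N)). ring. }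
  assert (Hbound : forall N, sum_f_R0 t N <= INR (S (S j))).
  { assert (Hm : INR (S j) + INR j * INR (S j) / (2 * (INR n - INR j)) <= INR (S (S j))).
    { rewrite (S_INR (S j)).
      assert (INR j * INR (S j) / (2 * (INR n - INR j)) <= 1); [|lra].
      unfold Rdiv. rewrite <- (Rinv_r (2 * (INR n - INR j))) by lra.
      apply Rmult_le_compat_r; [left; apply Rinv_0_lt_compat; lra| lra]. }
    pose proof (H_bound n j Hn Hjn).
    intros [|N].
    - rewrite sum0, t0. apply pos_INR.
    - rewrite Bid. pose proof (sumD_bound n j N Hn Hjn).
      pose proof (D_nonneg n (S N) j Hn). pose proof (pos_INR (S N)).
      pose proof (Rmult_le_pos _ _ H3 H2). lra. }
  destruct (sum_cv t _ tnn Hbound) as [b Hb].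
  exists b. split; [exact Hb|]. split.
  - assert (Hp : 0 < t (S j)).
    { rewrite tS. apply Rmult_lt_0_compat; [apply lt_0_INR; lia|]. unfold w.
      apply Rmult_lt_0_compat; [apply Rdiv_lt_0_compat; lra|].
      destruct j as [|j']. + rewrite P_0. simpl. lra. + apply P_pos; auto; lia. }
    assert (Hg : Un_growing (sum_f_R0 t)) by (apply sumf_growing; exact tnn).
    pose proof (growing_ineq (sum_f_R0 t) b Hg Hb (S j)) as Hi.
    rewrite sumS in Hi. assert (0 <= sum_f_R0 t j) by (apply cond_pos_sum; exact tnn). lra.
  - apply (lim_le _ _ _ 0%nat Hb). intros k; apply Hbound.
Qed.

Theorem mainTheorem7 (n m : nat) (hn : (1 <= n)%nat) (hm1 : (1 < m)%nat)
  (hm2 : INR m < sqrt (2 * INR n)) :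
  exists a b : R,
    E_is n m (fun s => / ell s) a /\
    E_is n (m - 1) ell b /\
    a < / b.
Proof.
  assert (Hmm : (m * m < 2 * n)%nat).
  { apply INR_lt. rewrite mult_INR, mult_INR. simpl (INR 2).
    pose proof (sqrt_sqrt (2 * INR n)) as Hs. pose proof (pos_INR m). pose proof (pos_INR n).
    pose proof (sqrt_pos (2 * INR n)).
    assert (2 * INR n >= 0) by lra. specialize (Hs ltac:(lra)).
    replace (1 + 1) with 2 by lra. nra. }
  destruct m as [|[|j]]; [lia|lia|].
  replace (S (S j) - 1)%nat with (S j) by lia.
  destruct (a_exists n (S j) hn ltac:(lia) ltac:(nia)) as [a [Ha Ha2]].
  assert (Hq : (j * S j + 2 * j <= 2 * n)%nat) by nia.
  apply le_INR in Hq. rewrite plus_INR, !mult_INR in Hq. simpl (INR 2) in Hq.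
  destruct (b_exists n j hn ltac:(nia) ltac:(lra)) as [b [Hb [Hb0 Hb1]]].
  exists a, b. split; [exact Ha|]. split; [exact Hb|].
  pose proof (Rinv_le_contravar _ _ Hb0 Hb1). lra.
Qed.
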